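(* Let $(R,\mathfrak{m})$ be a finite commutative local ring with identity and let $I$ be an ideal of $R$ with $I\subseteq\mathfrak m$ such that $\mathfrak{m}/I$ is not a principal ideal of $R/I$. If some minimal generating set of $\mathfrak{m}/I$ contains distinct elements $x+I$ and $y+I$ with $|U(R)x|\geq 3$ and $|U(R)y|\geq 3$, then $\Gamma''_I(R)$ is not planar.
   Context: $U(R)$ is the group of units of $R$ and $U(R)x=\{ux: u\in U(R)\}$. For an ideal $I$ of $R$, $\Gamma''_I(R)$ is the simple undirected graph whose vertex set is $\{x\in R\setminus I : xR+I\neq R\}$, with distinct vertices $x,y$ adjacent if and only if $x\notin yR+I$ and $y\notin xR+I$. A graph is planar if it can be drawn in the plane with edges meeting only at their endpoints. *)

(* Defs.v *)
From HB Require Import structures.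
From mathcomp Require Import all_boot all_order all_algebra.
From mathcomp Require Import all_classical all_reals all_analysis.
Set Implicit Arguments. Unset Strict Implicit. Unset Printing Implicit Defensive.
Import Order.TTheory GRing.Theory Num.Theory.
Import numFieldNormedType.Exports.
Local Open Scope classical_set_scope.
Local Open Scope ring_scope.

Section RingDefs.
Variable A : finComUnitRingType.

Definition is_ideal (J : {set A}) : Prop :=
  0 \in J /\ (forall a b, a \in J -> b \in J -> a + b \in J) /\
  (forall r a, a \in J -> r * a \in J).

Definition is_maximal_ideal (J : {set A}) : Prop :=
  is_ideal J /\ 1 \notin J /\
  (forall K : {set A}, is_ideal K -> J \subset K -> K = J \/ K = [set: A]%SET).

Definition local_max_ideal (m : {set A}) : Prop :=
  is_maximal_ideal m /\ (forall K, is_maximal_ideal K -> K = m).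

Definition princ_plus (I : {set A}) (a : A) : {set A} :=
  [set z | [exists r : A, [exists i in I, z == a * r + i]]].

(* the ideal of A generated by S and I, i.e. the preimage in A of the
   ideal of A/I generated by {s + I : s in S} *)
Definition gen_plus (I S : {set A}) : {set A} :=
  [set z | [exists c : {ffun A -> A}, z - \sum_(s in S) c s * s \in I]].

(* m/I is a principal ideal of A/I *)
Definition principal_mod (I m : {set A}) : Prop :=
  exists a : A, m = princ_plus I a.

(* S is a set of representatives (pairwise distinct mod I) of a minimal
   generating set {s + I : s in S} of the ideal m/I of A/I *)
Definition min_gen_set_mod (I m S : {set A}) : Prop :=
  S \subset m /\
  {in S &, forall s t, s - t \in I -> s = t} /\
  gen_plus I S = m /\
  (forall S' : {set A}, S' \proper S -> gen_plus I S' != m).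

Definition unit_orbit (x : A) : {set A} :=
  [set u * x | u in [set v : A | v \is a GRing.unit]].

Definition gvert (I : {set A}) : {set A} :=
  [set x | (x \notin I) && (princ_plus I x != [set: A]%SET)].

Definition gadj (I : {set A}) : rel A :=
  fun x y => [&& x != y, x \notin princ_plus I y & y \notin princ_plus I x].

End RingDefs.

Definition planar (R : realType) (T : finType) (V : {set T}) (adj : rel T) : Prop :=
  exists (p : T -> (R * R)%type) (arc : T -> T -> R -> (R * R)%type),
    {in V &, injective p} /\
    (forall u v, u \in V -> v \in V -> adj u v ->
       {within [set t : R | 0 <= t <= 1]%classic, continuous (arc u v)} /\
       (forall s t : R, 0 <= s <= 1 -> 0 <= t <= 1 -> arc u v s = arc u v t -> s = t) /\
       arc u v 0 = p u /\ arc u v 1 = p v) /\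
    (forall u v w (t : R), u \in V -> v \in V -> w \in V -> adj u v ->
       0 < t < 1 -> arc u v t <> p w) /\
    (forall u v u' v' (s t : R), u \in V -> v \in V -> u' \in V -> v' \in V ->
       adj u v -> adj u' v' -> ~ ((u = u' /\ v = v') \/ (u = v' /\ v = u')) ->
       0 < s < 1 -> 0 < t < 1 -> arc u v s <> arc u' v' t).

(* Main.v *)
Require Import Defs.
From HB Require Import structures.
From mathcomp Require Import all_boot all_order all_algebra.
From mathcomp Require Import all_classical all_reals all_analysis.
Local Open Scope ring_scope.
From mathcomp Require Import zify ring lra.
Set Implicit Arguments. Unset Strict Implicit. Unset Printing Implicit Defensive.
Import Order.TTheory GRing.Theory Num.Theory.
Import numFieldNormedType.Exports.

Definition dlnat (a b : nat) : int :=
  let d := ((b + 4 - a) %% 4)%N in if d == 3%N then -1 else d%:Z.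

Lemma dlnat_mod (a b : nat) : (a < 4)%N -> (b < 4)%N ->
  exists k : int, dlnat a b = b%:Z - a%:Z + 4 * k.
Proof.
move: a b; do 5?[case=> //]; do 5?[case=> //] => _ _;
  rewrite /dlnat /=;
  solve [exists 0; rewrite /=; lia | exists 1; lia | exists (-1); lia].
Qed.

Lemma dlnat_triple (a b c : nat) : (a < 4)%N -> (b < 4)%N -> (c < 4)%N ->
  dlnat a b != 2 -> dlnat b c != 2 -> dlnat a c != 2 ->
  dlnat a b + dlnat b c = dlnat a c.
Proof.
move: a b c; do 5?[case=> //]; do 5?[case=> //]; do 5?[case=> //] => _ _ _;
  by rewrite /dlnat /=.
Qed.

Lemma dlnat_anti (a b : nat) : (a < 4)%N -> (b < 4)%N ->
  dlnat a b != 2 -> dlnat b a = - dlnat a b.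
Proof.
move: a b; do 5?[case=> //]; do 5?[case=> //] => _ _; by rewrite /dlnat /=.
Qed.

Lemma dlnat_sym2 (a b : nat) : (a < 4)%N -> (b < 4)%N ->
  (dlnat a b != 2) = (dlnat b a != 2).
Proof.
move: a b; do 5?[case=> //]; do 5?[case=> //] => _ _; by rewrite /dlnat /=.
Qed.

Lemma dlnat_shift (a b : nat) : (a < 4)%N -> (b < 4)%N ->
  dlnat ((a + 2) %% 4) ((b + 2) %% 4) = dlnat a b.
Proof.
move: a b; do 5?[case=> //]; do 5?[case=> //] => _ _; by rewrite /dlnat /=.
Qed.

Section Quad.
Variable R : realType.
Implicit Types v w : (R * R)%type.

Definition quad v : nat :=
  if (0 < v.1) && (0 <= v.2) then 0%N
  else if (v.1 <= 0) && (0 < v.2) then 1%N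
  else if (v.1 < 0) && (v.2 <= 0) then 2%N
  else 3%N.

Lemma quad_lt4 v : (quad v < 4)%N.
Proof. rewrite /quad; do 3?case: ifP => //. Qed.

Definition dl v w : int := dlnat (quad v) (quad w).

Lemma quadN v : v != 0 -> quad (- v) = ((quad v + 2) %% 4)%N.
Proof.
case: v => a b /= Hv.
have Hab : a != 0 \/ b != 0.
  case: (eqVneq a 0) => [Ha|]; last by left.
  case: (eqVneq b 0) => [Hb|]; last by right.
  by move: Hv; rewrite Ha Hb eqxx.
rewrite /quad /=.
have [a0|a0|a0] := ltrgtP a 0; have [b0|b0|b0] := ltrgtP b 0;
 rewrite ?oppr_gt0 ?oppr_ge0 ?oppr_lt0 ?oppr_le0 ?a0 ?b0 ?(ltW a0) ?(ltW b0) /=;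
 rewrite ?(lt_geF a0) ?(lt_geF b0) ?(lt_gtF a0) ?(lt_gtF b0) ?ltxx ?lexx /= //;
 by case: Hab; rewrite ?a0 ?b0 eqxx.
Qed.

Definition near2 v w := `|w.1 - v.1| + `|w.2 - v.2| < `|v.1| + `|v.2|.

Lemma quad_spec v :
  [/\ quad v = 0%N -> 0 < v.1 /\ 0 <= v.2, quad v = 1%N -> v.1 <= 0 /\ 0 < v.2,
      quad v = 2%N -> v.1 < 0 /\ v.2 <= 0 & quad v = 3%N -> 0 <= v.1 /\ v.2 <= 0].
Proof.
rewrite /quad; case: v => a b /=.
case: ifP => [/andP[]//|H1]; case: ifP => [/andP[]//|H2]; case: ifP => [/andP[]//|H3];
  split => // _.
have [a0|a0] := leP 0 a; have [b0|b0] := leP b 0; split => //; try lra.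
all: try by move: H2; rewrite (ltW a0) b0.
all: try by move: H3; rewrite a0 b0.
all: try by move: H1; rewrite a0 (ltW b0).
all: have [a1|a1] := leP a 0; first by move: H2; rewrite a1 b0.
all: by move: H1; rewrite a1 (ltW b0).
Qed.

Lemma near2_ok v w : near2 v w -> dl v w != 2.
Proof.
rewrite /near2 /dl.
have [q0 q1 q2 q3] := quad_spec v; have [r0 r1 r2 r3] := quad_spec w.
have := quad_lt4 v; have := quad_lt4 w.
case: v w q0 q1 q2 q3 r0 r1 r2 r3 => a b [c d] /= q0 q1 q2 q3 r0 r1 r2 r3.
have h1 := ler_norm (c - a); have h2 := ler_norm (a - c) ; rewrite distrC in h2.
have h3 := ler_norm (d - b); have h4 := ler_norm (b - d); rewrite distrC in h4.
have h5 := ler_norm a; have h6 := ler_norm (- a); rewrite normrN in h6.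
have h7 := ler_norm b; have h8 := ler_norm (- b); rewrite normrN in h8.
move=> Hw Hv H.
have E: forall p q, p = quad (a, b) -> q = quad (c, d) -> dlnat p q = 2 -> False.
  move=> p q Ep Eq; rewrite -Ep in Hv q0 q1 q2 q3; rewrite -Eq in Hw r0 r1 r2 r3.
  case: p {Ep} Hv q0 q1 q2 q3 => [|[|[|[|p]]]] // _ q0 q1 q2 q3;
  case: q {Eq} Hw r0 r1 r2 r3 => [|[|[|[|q]]]] // _ r0 r1 r2 r3; rewrite /dlnat //= => _;
  try (have [] := q0 erefl); try (have [] := q1 erefl); try (have [] := q2 erefl);
  try (have [] := q3 erefl); try (have [] := r0 erefl); try (have [] := r1 erefl);
  try (have [] := r2 erefl); try (have [] := r3 erefl); move=> *.
  all: try (have : `|a| = a by apply/ger0_norm; lra);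
       try (have : `|a| = - a by apply/ler0_norm; lra);
       try (have : `|b| = b by apply/ger0_norm; lra);
       try (have : `|b| = - b by apply/ler0_norm; lra).
  all: try (have : `|c - a| = c - a by apply/ger0_norm; lra);
       try (have : `|c - a| = - (c - a) by apply/ler0_norm; lra);
       try (have : `|d - b| = d - b by apply/ger0_norm; lra);
       try (have : `|d - b| = - (d - b) by apply/ler0_norm; lra).
  all: try (move=> *; lra).
by apply/negP => /eqP /(E _ _ erefl erefl).
Qed.

End Quad.

Section C.
Local Open Scope classical_set_scope.
Variable R : realType.
Definition ctsI (g : R -> (R * R)%type) := forall s0, 0 <= s0 <= 1 ->
  forall eps, 0 < eps -> exists2 del, 0 < del & forall s, 0 <= s <= 1 ->
  `|s - s0| < del -> `|(g s).1 - (g s0).1| < eps /\ `|(g s).2 - (g s0).2| < eps.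

Lemma within_ctsI (g : R -> (R * R)%type) :
  {within [set t : R | 0 <= t <= 1], continuous g} -> ctsI g.
Proof.
move=> /subspace_continuousP cg s0 s01 eps eps0.
have := cvgr_dist_lt _ _ (cg s0 s01) _ eps0.
move=> H.
have : nbhs s0 (fun t => 0 <= t <= 1 -> `|g s0 - g t| < eps) by exact: H.
move=> /nbhs_ballP[d /= d0 Hd]; exists d => // s s01' ds.
have := Hd s; rewrite /ball /= distrC => /(_ ds s01').
rewrite prod_normE => Hn.
have h1 : `|(g s0 - g s).1| <= Num.max `|(g s0 - g s).1| `|(g s0 - g s).2| by rewrite le_max lexx.
have h2 : `|(g s0 - g s).2| <= Num.max `|(g s0 - g s).1| `|(g s0 - g s).2| by rewrite le_max lexx orbT.
by split; rewrite distrC; [exact: le_lt_trans h1 Hn | exact: le_lt_trans h2 Hn].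
Qed.

Let K := [set p : (R * R)%type | (0 <= p.1 <= 1) /\ (0 <= p.2 <= 1)].
Lemma K_compact : compact K.
Proof.
have -> : K = `[(0:R), 1] `*` `[(0:R), 1].
  by apply/seteqP; split => -[a b] /=; rewrite !in_itv.
by apply: compact_setX; apply: segment_compact.
Qed.

Lemma test (x : (R*R)%type) (d : R) : 0 < d ->
 \forall x' \near x & i \near (0:R)^'+, (`|x'.1 - x.1| < d /\ `|x'.2 - x.2| < d) /\ 0 < i < d.
Proof.
move=> d0.
exists ([set y | `|y.1 - x.1| < d /\ `|y.2 - x.2| < d], [set i : R | 0 < i < d]) => /=.
  split.
    apply/nbhs_ballP; exists d => // y; rewrite /ball /= /prod_ball => -[]; rewrite /ball /= => h1 h2.
    by rewrite distrC (distrC y.2).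
  near=> i; apply/andP; split; near: i; [exact: nbhs_right_gt | exact: nbhs_right_lt].
by move=> [y i] [/= ? ?].
Unshelve. all: end_near.
Qed.

Lemma dist_tri (a b c : R) : `|a - c| <= `|a - b| + `|b - c|.
Proof.
rewrite (_ : a - c = (a - b) + (b - c)); first exact: ler_normD.
by rewrite addrA subrK.
Qed.

Lemma abs_sub2 (a b c d eps : R) : `|a - b| < eps -> `|c - d| < eps ->
  `|(a - c) - (b - d)| < 2 * eps.
Proof.
move=> h1 h2.
rewrite (_ : (a - c) - (b - d) = (a - b) + (d - c)); last by ring.
have := ler_normD (a - b) (d - c); rewrite (distrC d) => h3; lra.
Qed.

Lemma near2_of (v a b : (R * R)%type) (eps : R) : 0 < eps ->
  16 * eps = `|v.1| + `|v.2| ->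
  `|a.1 - v.1| < 2 * eps -> `|a.2 - v.2| < 2 * eps ->
  `|b.1 - v.1| < 2 * eps -> `|b.2 - v.2| < 2 * eps -> near2 a b.
Proof.
move=> e0 ce h1 h2 h3 h4; rewrite /near2.
have t1 := dist_tri b.1 v.1 a.1; have t2 := dist_tri b.2 v.2 a.2.
have t3 := dist_tri v.1 a.1 0; have t4 := dist_tri v.2 a.2 0.
rewrite !subr0 in t3 t4.
rewrite !(distrC v.1) !(distrC v.2) in t1 t2 t3 t4.
lra.
Qed.

Lemma fine_sq (e f : R -> (R * R)%type) : ctsI e -> ctsI f ->
  (forall s t, 0 <= s <= 1 -> 0 <= t <= 1 -> e s - f t != 0) ->
  exists2 eta, 0 < eta & forall s t s' t', 0 <= s <= 1 -> 0 <= t <= 1 ->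
    0 <= s' <= 1 -> 0 <= t' <= 1 -> `|s - s'| < eta -> `|t - t'| < eta ->
    near2 (e s - f t) (e s' - f t').
Proof.
move=> ce cf nz.
pose G := fun p : (R * R)%type => e p.1 - f p.2.
pose P := fun (eta : R) (p : (R * R)%type) => K p -> forall q, K q ->
  `|p.1 - q.1| < eta -> `|p.2 - q.2| < eta -> near2 (G p) (G q).
have cov : \forall eta \near (0:R)^'+, K `<=` P eta.
  apply: (proj1 (compact_near_coveringP K) K_compact) => -[s0 t0] [/= hs ht].
  set v := G (s0, t0).
  have vnz : v != 0 by exact: nz.
  set c := `|v.1| + `|v.2|.
  have c0 : 0 < c.
    rewrite lt_neqAle addr_ge0 // andbT; apply: contra vnz => /eqP/esym c0; rewrite /c in c0.
    have n1 : `|v.1| = 0 by have := normr_ge0 v.1; have := normr_ge0 v.2; lra.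
    have n2 : `|v.2| = 0 by have := normr_ge0 v.1; have := normr_ge0 v.2; lra.
    move: n1 n2 => /normr0_eq0 n1 /normr0_eq0 n2.
    by apply/eqP; case: (v) n1 n2 => /= ? ? -> ->.
  have e0 : 0 < c / 16 by apply: divr_gt0.
  have [d1 d10 H1] := ce s0 hs _ e0; have [d2 d20 H2] := cf t0 ht _ e0.
  pose d := Num.min d1 d2 / 2.
  have m1 : Num.min d1 d2 <= d1 by rewrite ge_min lexx.
  have m2 : Num.min d1 d2 <= d2 by rewrite ge_min lexx orbT.
  have m0 : 0 < Num.min d1 d2 by rewrite lt_min d10 d20.
  have d0 : 0 < d by apply: divr_gt0.
  apply: filterS (test (s0, t0) d0) => -[x' i] /= [[hx1 hx2] /andP[i0 id]].
  move=> [Kx1 Kx2] q [Kq1 Kq2] hq1 hq2.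
  have ce' : 16 * (c / 16) = `|v.1| + `|v.2| by rewrite mulrC divfK.
  have hd : d * 2 = Num.min d1 d2 by rewrite divfK.
  have [a1 a2] := H1 x'.1 Kx1 ltac:(lra).
  have [b1 b2] := H2 x'.2 Kx2 ltac:(lra).
  have tq1 := dist_tri q.1 x'.1 s0; have tq2 := dist_tri q.2 x'.2 t0.
  rewrite (distrC q.1 x'.1) (distrC q.2 x'.2) in tq1 tq2.
  have [a3 a4] := H1 q.1 Kq1 ltac:(lra).
  have [b3 b4] := H2 q.2 Kq2 ltac:(lra).
  apply: (near2_of e0 ce').
  - exact: abs_sub2 a1 b1.
  - exact: abs_sub2 a2 b2.
  - exact: abs_sub2 a3 b3.
  - exact: abs_sub2 a4 b4.
have : \forall eta \near (0:R)^'+, (K `<=` P eta) /\ 0 < eta.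
  by near=> eta; split; near: eta; [exact: cov | exact: nbhs_right_gt].
move=> Hev; have [eta [Heta eta0]] := @filter_ex _ _ (at_right_proper_filter (0:R)) _ Hev.
exists eta => // s t s' t' hs ht hs' ht' h1 h2.
exact: (Heta (s, t) (conj hs ht) (conj hs ht) (s', t') (conj hs' ht')).
Unshelve. all: end_near.
Qed.
End C.


Lemma tele (u : nat -> int) N : \sum_(k < N) (u k - u k.+1) = u 0%N - u N.
Proof.
elim: N => [|N IH]; first by rewrite big_ord0 subrr.
by rewrite big_ord_recr /= IH addrA subrK.
Qed.

Section Dsec.
Variable R : realType.
Implicit Types u : nat -> (R * R)%type.

Definition Sq u N : int := \sum_(k < N) dl (u k) (u k.+1).

Lemma dl_triple (a b c : (R * R)%type) :
  dl a b != 2 -> dl b c != 2 -> dl a c != 2 -> dl a b + dl b c = dl a c.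
Proof. by apply: dlnat_triple; apply: quad_lt4. Qed.

Lemma dl_anti (a b : (R * R)%type) : dl a b != 2 -> dl b a = - dl a b.
Proof. by apply: dlnat_anti; apply: quad_lt4. Qed.

Lemma dlN (a b : (R * R)%type) : a != 0 -> b != 0 -> dl (- a) (- b) = dl a b.
Proof.
move=> a0 b0; rewrite /dl (quadN a0) (quadN b0).
by apply: dlnat_shift; apply: quad_lt4.
Qed.

Lemma Sq_mod u N : exists m : int,
  Sq u N = (quad (u N))%:Z - (quad (u 0%N))%:Z + 4 * m.
Proof.
elim: N => [|N [m IH]]; first by exists 0; rewrite /Sq big_ord0; lia.
have [k Hk] := dlnat_mod (quad_lt4 (u N)) (quad_lt4 (u N.+1)).
exists (m + k); rewrite /Sq big_ord_recr /= -/(Sq u N) IH /dl Hk; lia.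
Qed.

Lemma Sq_N u N : (forall k, (k <= N)%N -> u k != 0) ->
  Sq (fun k => - u k) N = Sq u N.
Proof.
move=> nz; apply: eq_bigr => k _; apply: dlN; apply: nz => //.
  exact: ltnW.
Qed.

Lemma cell_sum (G : nat -> nat -> (R * R)%type) N :
  \sum_(i < N) \sum_(j < N) (dl (G i j) (G i.+1 j) + dl (G i.+1 j) (G i.+1 j.+1)
     - dl (G i j.+1) (G i.+1 j.+1) - dl (G i j) (G i j.+1))
  = Sq (fun i => G i 0%N) N + Sq (fun j => G N j) N
    - Sq (fun i => G i N) N - Sq (fun j => G 0%N j) N.
Proof.
pose h i j := dl (G i j) (G i.+1 j).
pose v i j := dl (G i j) (G i j.+1).
transitivity (\sum_(i < N) \sum_(j < N) ((h i j - h i j.+1) - (v i j - v i.+1 j))).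
  by apply: eq_bigr => i _; apply: eq_bigr => j _; rewrite /h /v; ring.
rewrite (eq_bigr (fun i : 'I_N => (h i 0%N - h i N) -
   \sum_(j < N) (v i j - v i.+1 j))); last first.
  by move=> i _; rewrite sumrB tele.
have E2 : \sum_(i < N) \sum_(j < N) (v i j - v i.+1 j) =
    \sum_(j < N) (v 0%N j - v N j).
  rewrite exchange_big /=; apply: eq_bigr => j _; exact: (tele (fun i => v i j)).
rewrite sumrB E2.
rewrite !sumrB /Sq /h /v; ring.
Qed.

Definition pt (N k : nat) : R := k%:R / N%:R.

Lemma pt0 N : pt N 0 = 0.
Proof. by rewrite /pt mul0r. Qed.

Lemma ptN N : (0 < N)%N -> pt N N = 1.
Proof. by move=> N0; rewrite /pt divff // pnatr_eq0 -lt0n. Qed.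

Lemma pt01 N k : (0 < N)%N -> (k <= N)%N -> 0 <= pt N k <= 1.
Proof.
move=> N0 kN; rewrite /pt divr_ge0 ?ler0n //= ler_pdivrMr ?ltr0n // mul1r.
by rewrite ler_nat.
Qed.

Lemma ptS N k : (0 < N)%N -> pt N k.+1 - pt N k = N%:R^-1.
Proof. by move=> N0; rewrite /pt -mulrBl -natrB // subSnn mul1r. Qed.


Definition BS (e f : R -> (R * R)%type) N : int :=
  let G := fun i j => e (pt N i) - f (pt N j) in
  Sq (fun i => G i 0%N) N + Sq (fun j => G N j) N
    - Sq (fun i => G i N) N - Sq (fun j => G 0%N j) N.

Lemma square_zero (e f : R -> (R * R)%type) : ctsI e -> ctsI f ->
  (forall s t, 0 <= s <= 1 -> 0 <= t <= 1 -> e s - f t != 0) ->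
  exists N0, forall N, (N0 <= N)%N -> BS e f N = 0.
Proof.
move=> ce cf nz; have [eta eta0 Heta] := fine_sq ce cf nz.
exists (Num.Def.archi_bound (eta^-1)).+1 => N HN.
have N0 : (0 < N)%N by apply: leq_trans HN.
have Neta : N%:R^-1 < eta.
  rewrite -[eta]invrK ltf_pV2 ?posrE ?invr_gt0 ?ltr0n //.
  have ei : 0 <= eta^-1 by rewrite invr_ge0 ltW.
  have hb := archi_boundP ei.
  apply: (lt_le_trans hb).
  by rewrite ler_nat ltnW.
pose G := fun i j => e (pt N i) - f (pt N j).
have cl1 : forall i i', (i <= N)%N -> (i' = i \/ i' = i.+1) -> `|pt N i - pt N i'| < eta.
  move=> i i' iN [->|->]; first by rewrite subrr normr0.
  by rewrite distrC ptS // ger0_norm // invr_ge0 ler0n.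
have cl : forall i j i' j', (i <= N)%N -> (j <= N)%N -> (i' <= N)%N -> (j' <= N)%N ->
    (i' = i \/ i' = i.+1) -> (j' = j \/ j' = j.+1) -> dl (G i j) (G i' j') != 2.
  move=> i j i' j' iN jN i'N j'N hi hj; apply: near2_ok; apply: Heta;
    try exact: pt01; exact: cl1.
rewrite (_ : BS e f N = Sq (fun i => G i 0%N) N + Sq (fun j => G N j) N - Sq (fun i => G i N) N - Sq (fun j => G 0%N j) N) // -cell_sum; apply: big1 => i _; apply: big1 => j _.
have iN : (i < N)%N := ltn_ord i.
have jN : (j < N)%N := ltn_ord j.
have e1 := dl_triple (cl i j i.+1 j (ltnW iN) (ltnW jN) iN (ltnW jN) (or_intror erefl) (or_introl erefl))
   (cl i.+1 j i.+1 j.+1 iN (ltnW jN) iN jN (or_introl erefl) (or_intror erefl))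
   (cl i j i.+1 j.+1 (ltnW iN) (ltnW jN) iN jN (or_intror erefl) (or_intror erefl)).
have e2 := dl_triple (cl i j i j.+1 (ltnW iN) (ltnW jN) (ltnW iN) jN (or_introl erefl) (or_intror erefl))
   (cl i j.+1 i.+1 j.+1 (ltnW iN) jN iN jN (or_intror erefl) (or_introl erefl))
   (cl i j i.+1 j.+1 (ltnW iN) (ltnW jN) iN jN (or_intror erefl) (or_intror erefl)).
lia.
Qed.

End Dsec.


Lemma parity (SA SB : nat -> nat -> nat -> int) (QA QB QAB QBA : nat -> nat -> nat) :
  (forall i j k l, (i < 3)%N -> (j < 3)%N -> (k < 3)%N -> (l < 3)%N -> i != k -> j != l ->
     SA i j k + SB k l j - SB i j l - SA k l i = 0) ->
  (forall i j k, (i < 3)%N -> (j < 3)%N -> (k < 3)%N -> i != k ->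
     exists m : int, SA i j k = (QBA j k)%:Z - (QA i k)%:Z + 4 * m) ->
  (forall i j l, (i < 3)%N -> (j < 3)%N -> (l < 3)%N -> j != l ->
     exists m : int, SB i j l = (QB j l)%:Z - (QAB i l)%:Z + 4 * m) ->
  (forall i k, (i < 3)%N -> (k < 3)%N -> i != k -> QA k i = ((QA i k + 2) %% 4)%N) ->
  (forall j l, (j < 3)%N -> (l < 3)%N -> j != l -> QB l j = ((QB j l + 2) %% 4)%N) ->
  (forall i j, (i < 3)%N -> (j < 3)%N -> QBA j i = ((QAB i j + 2) %% 4)%N) ->
  False.
Proof.
move=> HB HA HBB QAr QBr QABr.
have := HB 0 0 1 1 isT isT isT isT isT isT.
have := HB 0 0 1 2 isT isT isT isT isT isT.
have := HB 0 1 1 0 isT isT isT isT isT isT.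
have := HB 0 1 1 2 isT isT isT isT isT isT.
have := HB 0 2 1 0 isT isT isT isT isT isT.
have := HB 0 2 1 1 isT isT isT isT isT isT.
have := HB 0 0 2 1 isT isT isT isT isT isT.
have := HB 0 0 2 2 isT isT isT isT isT isT.
have := HB 0 1 2 0 isT isT isT isT isT isT.
have := HB 0 1 2 2 isT isT isT isT isT isT.
have := HB 0 2 2 0 isT isT isT isT isT isT.
have := HB 0 2 2 1 isT isT isT isT isT isT.
have := HB 1 0 2 1 isT isT isT isT isT isT.
have := HB 1 0 2 2 isT isT isT isT isT isT.
have := HB 1 1 2 0 isT isT isT isT isT isT.
have := HB 1 1 2 2 isT isT isT isT isT isT.
have := HB 1 2 2 0 isT isT isT isT isT isT.
have := HB 1 2 2 1 isT isT isT isT isT isT.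
have [? ?] := HA 0 0 1 isT isT isT isT.
have [? ?] := HA 0 0 2 isT isT isT isT.
have [? ?] := HBB 0 0 1 isT isT isT isT.
have [? ?] := HBB 0 0 2 isT isT isT isT.
have [? ?] := HA 0 1 1 isT isT isT isT.
have [? ?] := HA 0 1 2 isT isT isT isT.
have [? ?] := HBB 0 1 0 isT isT isT isT.
have [? ?] := HBB 0 1 2 isT isT isT isT.
have [? ?] := HA 0 2 1 isT isT isT isT.
have [? ?] := HA 0 2 2 isT isT isT isT.
have [? ?] := HBB 0 2 0 isT isT isT isT.
have [? ?] := HBB 0 2 1 isT isT isT isT.
have [? ?] := HA 1 0 0 isT isT isT isT.
have [? ?] := HA 1 0 2 isT isT isT isT.
have [? ?] := HBB 1 0 1 isT isT isT isT.
have [? ?] := HBB 1 0 2 isT isT isT isT.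
have [? ?] := HA 1 1 0 isT isT isT isT.
have [? ?] := HA 1 1 2 isT isT isT isT.
have [? ?] := HBB 1 1 0 isT isT isT isT.
have [? ?] := HBB 1 1 2 isT isT isT isT.
have [? ?] := HA 1 2 0 isT isT isT isT.
have [? ?] := HA 1 2 2 isT isT isT isT.
have [? ?] := HBB 1 2 0 isT isT isT isT.
have [? ?] := HBB 1 2 1 isT isT isT isT.
have [? ?] := HA 2 0 0 isT isT isT isT.
have [? ?] := HA 2 0 1 isT isT isT isT.
have [? ?] := HBB 2 0 1 isT isT isT isT.
have [? ?] := HBB 2 0 2 isT isT isT isT.
have [? ?] := HA 2 1 0 isT isT isT isT.
have [? ?] := HA 2 1 1 isT isT isT isT.
have [? ?] := HBB 2 1 0 isT isT isT isT.
have [? ?] := HBB 2 1 2 isT isT isT isT.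
have [? ?] := HA 2 2 0 isT isT isT isT.
have [? ?] := HA 2 2 1 isT isT isT isT.
have [? ?] := HBB 2 2 0 isT isT isT isT.
have [? ?] := HBB 2 2 1 isT isT isT isT.
have := QAr 0 1 isT isT isT.
have := QBr 0 1 isT isT isT.
have := QAr 0 2 isT isT isT.
have := QBr 0 2 isT isT isT.
have := QABr 0 0 isT isT.
have := QABr 0 1 isT isT.
have := QABr 0 2 isT isT.
have := QAr 1 2 isT isT isT.
have := QBr 1 2 isT isT isT.
have := QABr 1 0 isT isT.
have := QABr 1 1 isT isT.
have := QABr 1 2 isT isT.
have := QABr 2 0 isT isT.
have := QABr 2 1 isT isT.
have := QABr 2 2 isT isT.
lia. Qed.


Arguments pt {R}.
Arguments ptN {R} [N].

Lemma split01 (R : realType) (s : R) : 0 <= s <= 1 -> s = 0 \/ s = 1 \/ 0 < s < 1.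
Proof.
move=> /andP[h0 h1].
have [s0|s0] := eqVneq s 0; first by left.
have [s1|s1] := eqVneq s 1; first by right; left.
right; right; rewrite lt_neqAle eq_sym s0 h0 /= lt_neqAle s1 h1 //.
Qed.

Lemma Sq_ext (R : realType) (u v : nat -> (R * R)%type) N :
  (forall k, u k = v k) -> Sq u N = Sq v N.
Proof. by move=> H; apply: eq_bigr => k _; rewrite !H. Qed.

Lemma K33 (R : realType) (T : finType) (V : {set T}) (adj : rel T) (a b : nat -> T) :
  (forall i, (i < 3)%N -> a i \in V) -> (forall i, (i < 3)%N -> b i \in V) ->
  (forall i k, (i < 3)%N -> (k < 3)%N -> i != k -> a i != a k) ->
  (forall j l, (j < 3)%N -> (l < 3)%N -> j != l -> b j != b l) ->
  (forall i j, (i < 3)%N -> (j < 3)%N -> a i != b j) ->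
  (forall i j, (i < 3)%N -> (j < 3)%N -> adj (a i) (b j)) ->
  ~ planar R V adj.
Proof.
move=> aV bV ad bd abd adjab [p [arc [pinj [Harc [Hv He]]]]].
pose E i j := arc (a i) (b j).
pose PA i := p (a i); pose PB j := p (b j).
have HE : forall i j, (i < 3)%N -> (j < 3)%N ->
    [/\ ctsI (E i j), E i j 0 = PA i & E i j 1 = PB j].
  move=> i j i3 j3.
  have [c [_ [e0 e1]]] := Harc (a i) (b j) (aV i i3) (bV j j3) (adjab i j i3 j3).
  by split => //; apply: within_ctsI.
have pne : forall u w, u \in V -> w \in V -> u != w -> p u != p w.
  by move=> u w uV wV; apply: contra => /eqP /pinj -> //.
have nz : forall i j k l, (i < 3)%N -> (j < 3)%N -> (k < 3)%N -> (l < 3)%N ->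
    i != k -> j != l -> forall s t, 0 <= s <= 1 -> 0 <= t <= 1 ->
    E i j s - E k l t != 0.
  move=> i j k l i3 j3 k3 l3 ik jl s t hs ht; rewrite subr_eq0.
  have [_ Ei0 Ei1] := HE i j i3 j3; have [_ Ek0 Ek1] := HE k l k3 l3.
  have aik := ad i k i3 k3 ik; have bjl := bd j l j3 l3 jl.
  have abil := abd i l i3 l3; have abkj := abd k j k3 j3.
  have [->|[->|si]] := split01 hs; have [->|[->|ti]] := split01 ht;
    rewrite ?Ei0 ?Ei1 ?Ek0 ?Ek1 /PA /PB.
  - exact: pne (aV i i3) (aV k k3) aik.
  - exact: pne (aV i i3) (bV l l3) abil.
  - apply/eqP => Hc; apply: (Hv (a k) (b l) (a i) t (aV k k3) (bV l l3) (aV i i3)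
      (adjab k l k3 l3) ti); by rewrite Hc.
  - by apply: pne (bV j j3) (aV k k3) _; rewrite eq_sym.
  - exact: pne (bV j j3) (bV l l3) bjl.
  - apply/eqP => Hc; apply: (Hv (a k) (b l) (b j) t (aV k k3) (bV l l3) (bV j j3)
      (adjab k l k3 l3) ti); by rewrite Hc.
  - apply/eqP; exact: (Hv (a i) (b j) (a k) s (aV i i3) (bV j j3) (aV k k3)
      (adjab i j i3 j3) si).
  - apply/eqP; exact: (Hv (a i) (b j) (b l) s (aV i i3) (bV j j3) (bV l l3)
      (adjab i j i3 j3) si).
  - apply/eqP; apply: (He (a i) (b j) (a k) (b l) s t (aV i i3) (bV j j3) (aV k k3)
      (bV l l3) (adjab i j i3 j3) (adjab k l k3 l3) _ si ti).
    case=> -[h1 h2]; [by move/eqP: aik | by move/eqP: abil].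
have sq : forall x : 'I_3 * 'I_3 * 'I_3 * 'I_3, exists N0 : nat, forall N, (N0 <= N)%N ->
    (x.1.1.1 : nat) != x.1.2 -> (x.1.1.2 : nat) != x.2 ->
    BS (E x.1.1.1 x.1.1.2) (E x.1.2 x.2) N = 0.
  move=> [[[i j] k] l] /=.
  case: (eqVneq (i : nat) k) => [_|ik]; first by exists 0%N.
  case: (eqVneq (j : nat) l) => [_|jl]; first by exists 0%N.
  have [ci _ _] := HE i j (ltn_ord i) (ltn_ord j).
  have [ck _ _] := HE k l (ltn_ord k) (ltn_ord l).
  have [N0 HN0] := square_zero ci ck
    (nz i j k l (ltn_ord i) (ltn_ord j) (ltn_ord k) (ltn_ord l) ik jl).
  by exists N0 => N HN _ _; apply: HN0.
have [fN HfN] := fin_all_exists sq.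
pose N := (\max_x fN x).+1.
have N0 : (0 < N)%N by [].
have BS0 : forall i j k l, (i < 3)%N -> (j < 3)%N -> (k < 3)%N -> (l < 3)%N ->
    i != k -> j != l -> BS (E i j) (E k l) N = 0.
  move=> i j k l i3 j3 k3 l3 ik jl.
  have := HfN (inord i, inord j, inord k, inord l) N.
  rewrite /= !inordK //; apply => //.
  exact: leq_trans (leq_bigmax _) (leqnSn _).
pose SA i j k := Sq (fun n => E i j (pt N n) - PA k) N.
pose SB i j l := Sq (fun n => E i j (pt N n) - PB l) N.
pose QA i k := quad (PA i - PA k).
pose QB j l := quad (PB j - PB l).
pose QAB i l := quad (PA i - PB l).
pose QBA j k := quad (PB j - PA k).
have p01 : forall n, (n <= N)%N -> 0 <= (pt N n : R) <= 1 by move=> n; apply: pt01.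
apply: (@parity SA SB QA QB QAB QBA).
- move=> i j k l i3 j3 k3 l3 ik jl; rewrite -(BS0 i j k l i3 j3 k3 l3 ik jl) /BS /=.
  have [_ Ei0 Ei1] := HE i j i3 j3; have [_ Ek0 Ek1] := HE k l k3 l3.
  congr (_ + _ - _ - _).
  + by apply: Sq_ext => n; rewrite pt0 Ek0.
  + rewrite (ptN N0) Ei1.
    transitivity (Sq (fun n => - (E k l (pt N n) - PB j)) N); last first.
      by apply: Sq_ext => n; rewrite opprB.
    symmetry; apply: Sq_N => n nN.
    rewrite -Ei1 -oppr_eq0 opprB; apply: nz => //; [by rewrite ler01 lexx | exact: pt01].
  + by apply: Sq_ext => n; rewrite (ptN N0) Ek1.
  + rewrite pt0 Ei0.
    transitivity (Sq (fun n => - (E k l (pt N n) - PA i)) N); last first.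
      by apply: Sq_ext => n; rewrite opprB.
    symmetry; apply: Sq_N => n nN.
    rewrite -Ei0 -oppr_eq0 opprB; apply: nz => //; [by rewrite lexx ler01 | exact: pt01].
- move=> i j k i3 j3 k3 ik; have [_ Ei0 Ei1] := HE i j i3 j3.
  have [m Hm] := Sq_mod (fun n => E i j (pt N n) - PA k) N.
  by exists m; rewrite /SA Hm /= pt0 (ptN N0) Ei0 Ei1.
- move=> i j l i3 j3 l3 jl; have [_ Ei0 Ei1] := HE i j i3 j3.
  have [m Hm] := Sq_mod (fun n => E i j (pt N n) - PB l) N.
  by exists m; rewrite /SB Hm /= pt0 (ptN N0) Ei0 Ei1.
- move=> i k i3 k3 ik; rewrite /QA -quadN ?opprB //.
  by rewrite subr_eq0; apply: pne (aV i i3) (aV k k3) (ad i k i3 k3 ik).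
- move=> j l j3 l3 jl; rewrite /QB -quadN ?opprB //.
  by rewrite subr_eq0; apply: pne (bV j j3) (bV l l3) (bd j l j3 l3 jl).
- move=> i j i3 j3; rewrite /QBA /QAB -quadN ?opprB //.
  by rewrite subr_eq0; apply: pne (aV i i3) (bV j j3) (abd i j i3 j3).
Qed.


Lemma three_elems (T : finType) (X : {set T}) (t0 : T) : (3 <= #|X|)%N ->
  exists f : nat -> T, (forall i, (i < 3)%N -> f i \in X) /\
    (forall i k, (i < 3)%N -> (k < 3)%N -> i != k -> f i != f k).
Proof.
move=> X3; exists (fun i => nth t0 (enum X) i); split.
  move=> i i3; rewrite -mem_enum; apply: mem_nth; rewrite -cardE.
  exact: leq_trans i3 X3.
move=> i k i3 k3 ik; rewrite nth_uniq ?enum_uniq // -cardE.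
  exact: leq_trans i3 X3.
exact: leq_trans k3 X3.
Qed.

Section Ring.
Variable A : finComUnitRingType.
Variable I : {set A}.
Hypothesis HI : is_ideal I.

Lemma idealD a b : a \in I -> b \in I -> a + b \in I.
Proof. by case: HI => _ [H _]; apply: H. Qed.
Lemma idealM r a : a \in I -> r * a \in I.
Proof. by case: HI => _ [_ H]; apply: H. Qed.
Lemma ideal0 : (0 : A) \in I.
Proof. by case: HI. Qed.
Lemma idealN a : a \in I -> - a \in I.
Proof. by move=> aI; rewrite -mulN1r; apply: idealM. Qed.

Lemma pp_intro (a z r i : A) : i \in I -> z = a * r + i -> z \in princ_plus I a.
Proof.
move=> iI ->; rewrite inE; apply/existsP; exists r; apply/existsP; exists i.
by rewrite iI eqxx.
Qed.

Lemma pp_elim (a z : A) : z \in princ_plus I a -> exists r i, i \in I /\ z = a * r + i.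
Proof.
rewrite inE => /existsP[r /existsP[i /andP[iI /eqP ->]]]; by exists r, i.
Qed.

Lemma pp_units (u v x y : A) : u \is a GRing.unit -> v \is a GRing.unit ->
  u * x \in princ_plus I (v * y) -> x \in princ_plus I y.
Proof.
move=> uU vU /pp_elim[r [i [iI E]]].
apply: (@pp_intro _ _ (v * r * u^-1) (u^-1 * i)); first exact: idealM.
by rewrite -[x](mulKr uU) E; ring.
Qed.


Lemma gen_sub (S : {set A}) (x : A) : x \in S ->
  gen_plus I (S :\ x) \subset gen_plus I S.
Proof.
move=> xS; apply/fintype.subsetP => z; rewrite !inE => /existsP[c Hc].
apply/existsP; exists [ffun s => if s == x then 0 else c s].
rewrite (big_setD1 x xS) /= ffunE eqxx mul0r add0r.
rewrite (eq_bigr (fun s => c s * s)) //.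
by move=> s; rewrite !inE ffunE => /andP[/negbTE -> _].
Qed.

Lemma key (m S : {set A}) (x y : A) : min_gen_set_mod I m S ->
  x \in S -> y \in S -> x - y \notin I -> x \notin princ_plus I y.
Proof.
move=> [Sm [Sd [Sg Smin]]] xS yS xy; apply/negP => /pp_elim[r [i [iI E]]].
have yx : y != x by apply: contra xy => /eqP ->; rewrite subrr ideal0.
have yS' : y \in S :\ x by rewrite !inE yx yS.
have /negP := Smin (S :\ x) (properD1 xS); apply.
rewrite finset.eqEsubset -{1}Sg gen_sub //= -Sg.
apply/fintype.subsetP => z; rewrite !inE => /existsP[c Hc].
apply/existsP; exists [ffun s => if s == y then c y + c x * r else c s].
rewrite (big_setD1 y yS') /= ffunE eqxx.
rewrite (eq_bigr (fun s => c s * s)); last first.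
  by move=> s; rewrite !inE ffunE => /andP[/negbTE -> _].
move: Hc; rewrite (big_setD1 x xS) (big_setD1 y yS') /= => Hc.
have := idealD Hc (idealM (c x) iI).
subst x; congr (_ \in I); ring.
Qed.

Lemma unit_orbitP (x z : A) : z \in unit_orbit x ->
  exists2 u, u \is a GRing.unit & z = u * x.
Proof. by case/imsetP => u; rewrite inE => uU ->; exists u. Qed.

End Ring.

Unset Implicit Arguments.

Theorem proposition3p13 (A : finComUnitRingType) (m I : {set A}) (x y : A)
    (R : realType) :
  local_max_ideal m -> is_ideal I -> I \subset m -> ~ principal_mod I m ->
  (exists S : {set A}, min_gen_set_mod I m S /\ x \in S /\ y \in S /\
     x - y \notin I) ->
  (3 <= #|unit_orbit x|)%N -> (3 <= #|unit_orbit y|)%N ->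
  ~ planar R (gvert I) (gadj I).
Proof.
move=> [[mI [m1 _]] _] HI Im _ [S [HS [xS [yS xy]]]] ox oy.
have yx : y - x \notin I.
  by apply: contra xy => H; rewrite -opprB; apply: idealN.
have k1 := key HI HS xS yS xy.
have k2 := key HI HS yS xS yx.
have [a [aO ad]] := three_elems x ox.
have [b [bO bd]] := three_elems y oy.
have [Sm _] := HS.
have xm : x \in m by apply: (fintype.subsetP Sm).
have ym : y \in m by apply: (fintype.subsetP Sm).
have mM : forall r z, z \in m -> r * z \in m by case: mI => _ [_ H].
have mD : forall z w, z \in m -> w \in m -> z + w \in m by case: mI => _ [H _].
have adjL : forall u v, u \is a GRing.unit -> v \is a GRing.unit ->
    u * x \notin princ_plus I (v * y).
  by move=> u v uU vU; apply: contra k1; apply: pp_units.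
have adjR : forall u v, u \is a GRing.unit -> v \is a GRing.unit ->
    v * y \notin princ_plus I (u * x).
  by move=> u v uU vU; apply: contra k2; apply: pp_units.
have notT : forall z, z \in m -> princ_plus I z != [set: A].
  move=> z zm; apply/negP => /eqP H.
  have : (1 : A) \in princ_plus I z by rewrite H inE.
  move=> /(pp_elim) [r [i [iI E]]]; move/negP: m1; apply.
  rewrite E; apply: mD; first by rewrite mulrC; apply: mM.
  exact: (fintype.subsetP Im).
have notIx : forall u, u \is a GRing.unit -> u * x \notin I.
  move=> u uU; apply/negP => H; move/negP: (adjL u 1 uU (unitr1 A)); apply.
  by apply: (pp_intro (r := 0) H); rewrite mulr0 add0r.
have notIy : forall v, v \is a GRing.unit -> v * y \notin I.
  move=> v vU; apply/negP => H; move/negP: (adjR 1 v (unitr1 A) vU); apply.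
  by apply: (pp_intro (r := 0) H); rewrite mulr0 add0r.
have neq : forall u v, u \is a GRing.unit -> v \is a GRing.unit -> u * x != v * y.
  move=> u v uU vU; apply/negP => /eqP H; move/negP: (adjL u v uU vU); apply.
  by apply: (pp_intro (r := 1) (ideal0 HI)); rewrite mulr1 addr0.
apply: (@K33 R _ (gvert I) (gadj I) a b).
- move=> i i3; have [u uU ->] := unit_orbitP (aO i i3).
  by rewrite inE notIx //= notT // mM.
- move=> i i3; have [u uU ->] := unit_orbitP (bO i i3).
  by rewrite inE notIy //= notT // mM.
- exact: ad.
- exact: bd.
- move=> i j i3 j3; have [u uU ->] := unit_orbitP (aO i i3).
  have [v vU ->] := unit_orbitP (bO j j3); exact: neq.
- move=> i j i3 j3; have [u uU ->] := unit_orbitP (aO i i3).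
  have [v vU ->] := unit_orbitP (bO j j3).
  by rewrite /gadj neq ?adjL ?adjR.
Qed.
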